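(* There is an absolute constant $C>0$ such that the following holds. Let $G(V,E)$ be a graph with nonnegative edge weights $w$, let $k\ge c\ge 2$ be integers, let $G^{(1)},\ldots,G^{(k)}$ be a random $k$-clustering of $G$ with expected multiplicity $c$, let $\pi$ be a permutation of $E$ in non-increasing order of weight, $M_i:=\mathsf{Greedy}(G^{(i)},\pi)$, and $H$ the graph on $V$ with edge set $\bigcup_i M_i$. Fix a maximum weight matching $M^*$ of $G$, and let $F_1\subseteq M^*$ be the set of edges $e\in M^*$ that are free for machine $1$ (no endpoint of $e$ is matched by $\mathsf{Greedy}(G^{(1)},\pi^{<e})$), and $F'_1:=F_1\cap E(H)$. Then $$\mathbb{E}[w(F'_1)] \geq \mathbb{E}[w(F_1)] - C\cdot\frac{\log c}{c}\cdot \mathrm{opt}(G).$$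
   Context: $\mathrm{opt}(G)$ is the weight of a maximum weight matching; $w(S)$ is the total weight of an edge set $S$. $\mathsf{Greedy}(G,\pi)$ scans the edges of $G$ in order $\pi$ and adds $(u,v)$ iff neither endpoint is matched; $\mathsf{Greedy}(G^{(1)},\pi^{<e})$ means running it on $G^{(1)}$ and stopping just before processing $e$. A random $k$-clustering with expected multiplicity $c$: independently for each edge $e$, draw $c_e\sim\mathrm{Bin}(k,c/k)$ and place $e$ in $c_e$ distinct uniformly random sets among $E^{(1)},\ldots,E^{(k)}$; $G^{(i)}=G(V,E^{(i)})$. Expectations are over the random clustering. *)

(* Defs.v *)
From HB Require Import structures.
From mathcomp Require Import all_boot all_order all_algebra.
From mathcomp Require Import Rstruct.
From Stdlib Require Rpower.
From Stdlib Require Import Rdefinitions.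
Set Implicit Arguments. Unset Strict Implicit. Unset Printing Implicit Defensive.
Import Order.TTheory GRing.Theory Num.Theory.
Local Open Scope ring_scope.

Section Defs.
Variable V : finType.

Definition simple_graph (E : {set {set V}}) : Prop :=
  forall e, e \in E -> #|e| = 2%N.

Definition wt (w : {set V} -> R) (S : {set {set V}}) : R := \sum_(e in S) w e.

Definition is_matching (E M : {set {set V}}) : bool := (M \subset E) && trivIset M.

Definition opt (E : {set {set V}}) (w : {set V} -> R) : R :=
  \big[Num.max/0]_(M : {set {set V}} | is_matching E M) wt w M.

Definition is_max_weight_matching (E : {set {set V}}) (w : {set V} -> R)
  (M : {set {set V}}) : Prop :=
  is_matching E M /\ forall M', is_matching E M' -> wt w M' <= wt w M.

Definition nonincreasing_order (E : {set {set V}}) (w : {set V} -> R)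
  (pi : seq {set V}) : Prop :=
  [/\ uniq pi, pi =i E & sorted (fun a b => w b <= w a) pi].

Definition greedy (A : {set {set V}}) (s : seq {set V}) : {set {set V}} :=
  foldl (fun M e => if (e \in A) && [disjoint e & cover M] then e |: M else M)
        set0 s.

Definition greedy_before (A : {set {set V}}) (pi : seq {set V}) (e : {set V}) :=
  greedy A (take (index e pi) pi).

Variable k : nat.

(* A k-clustering: each edge is assigned the set of machines containing it. *)
Definition clustering := {ffun {set V} -> {set 'I_k}}.

Definition machine_edges (E : {set {set V}}) (X : clustering) (i : 'I_k) :=
  [set e in E | i \in X e].

(* Probability that an edge is put into exactly the machine set S:
   c_e ~ Bin(k, c/k), then a uniformly random c_e-subset of the k machines. *)
Definition binom_pmf (p : R) (s : nat) : R :=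
  ('C(k, s))%:R * p ^+ s * (1 - p) ^+ (k - s).

Definition edge_set_prob (c : nat) (S : {set 'I_k}) : R :=
  binom_pmf (c%:R / k%:R) #|S| / ('C(k, #|S|))%:R.

(* Law of the random k-clustering with expected multiplicity c (independent
   over edges of E; edges outside E are in no machine). *)
Definition clustering_prob (E : {set {set V}}) (c : nat) (X : clustering) : R :=
  (\prod_(e in E) edge_set_prob c (X e)) *
  (\prod_(e in ~: E) (X e == set0)%:R).

Definition Exp (E : {set {set V}}) (c : nat) (f : clustering -> R) : R :=
  \sum_(X : clustering) clustering_prob E c X * f X.

Definition H_edges (E : {set {set V}}) (pi : seq {set V}) (X : clustering) :=
  \bigcup_(i : 'I_k) greedy (machine_edges E X i) pi.

Definition free_edges (E : {set {set V}}) (pi : seq {set V}) (Mstar : {set {set V}})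
  (X : clustering) (i : 'I_k) :=
  [set e in Mstar | [disjoint e & cover (greedy_before (machine_edges E X i) pi e)]].

End Defs.

(* Main.v *)
Require Import Defs.
From HB Require Import structures.
From mathcomp Require Import all_boot all_order all_algebra.
From mathcomp Require Import Rstruct.
From Stdlib Require Rpower.
From Stdlib Require Import Rdefinitions.
From mathcomp Require Import ring lra.
Set Implicit Arguments. Unset Strict Implicit. Unset Printing Implicit Defensive.
Import Order.TTheory GRing.Theory Num.Theory.
Local Open Scope ring_scope.

Definition gstep (V : finType) (A : {set {set V}}) (M : {set {set V}}) (e : {set V}) :=
  if (e \in A) && [disjoint e & cover M] then e |: M else M.

Lemma greedyE (V : finType) (A : {set {set V}}) s : greedy A s = foldl (gstep A) set0 s.
Proof. by []. Qed.

Lemma foldl_gstep_sub (V : finType) (A : {set {set V}}) (s : seq {set V}) (M : {set {set V}}) :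
  M \subset foldl (gstep A) M s.
Proof.
elim: s M => [|x s IH] M /=; first exact: subxx.
apply: subset_trans (IH _); rewrite /gstep; case: ifP => // _; exact: subsetUr.
Qed.

Lemma greedy_mem (V : finType) (A : {set {set V}}) (pi : seq {set V}) e :
  e \in pi -> e \in A -> [disjoint e & cover (greedy A (take (index e pi) pi))] ->
  e \in greedy A pi.
Proof.
move=> epi eA dis.
have := cat_take_drop (index e pi) pi => Hpi.
rewrite -Hpi (drop_nth e); last by rewrite index_mem.
rewrite nth_index // greedyE foldl_cat /=.
apply: (subsetP (foldl_gstep_sub _ _ _)).
rewrite -greedyE /gstep eA dis /= ; exact: setU11.
Qed.

Lemma greedy_eq (V : finType) (A B : {set {set V}}) s :
  {in s, forall f, (f \in A) = (f \in B)} -> greedy A s = greedy B s.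
Proof.
rewrite !greedyE; move: (set0 : {set {set V}}).
elim: s => [|x s IH] M H //=.
have -> : gstep A M x = gstep B M x by rewrite /gstep H ?mem_head.
apply: IH => f fs; apply: H; by rewrite inE fs orbT.
Qed.

Definition sig (V : finType) (E : {set {set V}}) (p : R) (f : {set V}) (b : bool) : R :=
  if f \in E then (if b then p else 1 - p) else (~~ b)%:R.

Definition rho (V : finType) (E : {set {set V}}) (p : R) (T : {ffun {set V} -> bool}) : R :=
  \prod_f sig E p f (T f).

Definition col (V : finType) (k : nat) (X : clustering V k) :
  {ffun 'I_k -> {ffun {set V} -> bool}} := [ffun i => [ffun f => i \in X f]].

Definition uncol (V : finType) (k : nat) (Y : {ffun 'I_k -> {ffun {set V} -> bool}}) :
  clustering V k := [ffun f => [set i | Y i f]].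

Lemma col_bij (V : finType) (k : nat) : bijective (@col V k).
Proof.
exists (@uncol V k).
  move=> X; apply/ffunP => f; apply/setP => i; by rewrite !ffunE inE !ffunE.
move=> Y; apply/ffunP => i; apply/ffunP => f; by rewrite !ffunE inE.
Qed.

Lemma esp_prod (k c : nat) (S : {set 'I_k}) :
  edge_set_prob c S = \prod_(i : 'I_k) (if i \in S then c%:R / k%:R else 1 - c%:R / k%:R).
Proof.
rewrite /edge_set_prob /binom_pmf !RdivE !RmultE.
have Hk : leq #|S| k by have := max_card S; rewrite card_ord.
have HC : (('C(k, #|S|))%:R != 0 :> R) by rewrite pnatr_eq0 -lt0n bin_gt0.
rewrite (bigID (fun i => i \in S)) /=.
rewrite (eq_bigr (fun _ => c%:R / k%:R)); last by move=> i ->.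
rewrite [X in _ = _ * X](eq_bigr (fun _ => 1 - c%:R / k%:R)); last by move=> i /negbTE ->.
rewrite !prodr_const.
have -> : #|[pred i | i \notin S]| = (k - #|S|)%nat.
  have -> : #|[pred i | i \notin S]| = #|~: S| by apply: eq_card => i; rewrite !inE.
  have H := cardsC S; rewrite card_ord in H.
  by apply/eqP; rewrite -(eqn_add2l #|S|) H subnKC.
have -> : #|[pred i | i \in S]| = #|S| by [].
set a := _ ^+ #|S|; set b := _ ^+ (k - _)%nat.
by rewrite mulrAC [_ * a * _]mulrAC mulfV // mul1r.
Qed.

Lemma set0_prod (k : nat) (S : {set 'I_k}) :
  (S == set0)%:R = \prod_(i : 'I_k) (i \notin S)%:R :> R.
Proof.
case: (set_0Vmem S) => [->|[i Hi]].
  by rewrite eqxx big1 // => i _; rewrite inE.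
have -> : (S == set0) = false by apply/negbTE/set0Pn; exists i.
by rewrite (bigD1 i) //= Hi mul0r.
Qed.

Lemma cprob_col (V : finType) (k c : nat) (E : {set {set V}}) (X : clustering V k) :
  clustering_prob E c X = \prod_(i : 'I_k) rho E (c%:R / k%:R) (col X i).
Proof.
rewrite /rho.
under [RHS]eq_bigr do under eq_bigr do rewrite !ffunE.
rewrite exchange_big /= (bigID (fun f => f \in E)) /=.
rewrite /clustering_prob; congr (_ * _).
  apply: eq_bigr => f fE; rewrite esp_prod; apply: eq_bigr => i _; by rewrite /sig fE.
apply: eq_big => [f|f]; first by rewrite inE.
rewrite inE => /negbTE fE; rewrite set0_prod; apply: eq_bigr => i _; by rewrite /sig fE.
Qed.

Definition tog (V : finType) (e : {set V}) (T : {ffun {set V} -> bool}) :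
  {ffun {set V} -> bool} := [ffun f => if f == e then ~~ T e else T f].

Lemma tog_inv (V : finType) (e : {set V}) : involutive (tog e).
Proof. move=> T; apply/ffunP => f; rewrite !ffunE; case: eqP => [->|//]; by rewrite eqxx negbK. Qed.

Lemma rho_sum1 (V : finType) (E : {set {set V}}) (p : R) :
  \sum_T rho E p T = 1.
Proof.
rewrite /rho -(bigA_distr_bigA (fun f b => sig E p f b)) /=.
apply: big1 => f _; rewrite big_bool /sig; case: ifP => _ /=; ring.
Qed.

Lemma sig_ge0 (V : finType) (E : {set {set V}}) (p : R) f b :
  0 <= p -> p <= 1 -> 0 <= sig E p f b.
Proof.
move=> p0 p1; rewrite /sig; case: ifP => _; case: b => //=; rewrite ?subr_ge0 //.
Qed.

Lemma rho_ge0 (V : finType) (E : {set {set V}}) (p : R) T :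
  0 <= p -> p <= 1 -> 0 <= rho E p T.
Proof. move=> p0 p1; apply: prodr_ge0 => f _; exact: sig_ge0. Qed.

Lemma split_e (V : finType) (E : {set {set V}}) (p : R) (e : {set V}) (eE : e \in E)
  (g : bool -> R) (phi : {ffun {set V} -> bool} -> R)
  (Hphi : forall T, phi (tog e T) = phi T) :
  \sum_(T : {ffun {set V} -> bool}) rho E p T * (g (T e) * phi T) =
  ((1 - p) * g false + p * g true) *
    \sum_(T : {ffun {set V} -> bool} | ~~ T e) (\prod_(f | f != e) sig E p f (T f)) * phi T.
Proof.
rewrite (bigID (fun T : {ffun {set V} -> bool} => T e)) /=.
rewrite (reindex (tog e)) /=; last by exists (tog e) => T _; rewrite tog_inv.
have Hte : forall T : {ffun {set V} -> bool}, tog e T e = ~~ T e by move=> T; rewrite ffunE eqxx.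
under eq_bigl do rewrite Hte.
rewrite -big_split /= mulr_sumr; apply: eq_bigr => T /negbTE Te.
have Hr : forall T', rho E p T' = sig E p e (T' e) * \prod_(f | f != e) sig E p f (T' f).
  by move=> T'; rewrite /rho (bigD1 e).
rewrite !Hr Hte Te Hphi.
have -> : \prod_(f | f != e) sig E p f (tog e T f) = \prod_(f | f != e) sig E p f (T f).
  by apply: eq_bigr => f /negbTE fe; rewrite ffunE fe.
rewrite /sig eE /=; ring.
Qed.

Lemma bern (x : R) (n : nat) : 0 <= x -> x <= 1 -> (1 - x) ^+ n * (1 + n%:R * x) <= 1.
Proof.
move=> x0 x1; elim: n => [|n IH]; first by rewrite expr0 mul0r addr0 mul1r.
have y0 : 0 <= (1 - x) ^+ n by apply: exprn_ge0; rewrite subr_ge0.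
rewrite exprS.
have -> : (1 - x) * (1 - x) ^+ n * (1 + n.+1%:R * x) = (1 - x) ^+ n * ((1 - x) * (1 + n.+1%:R * x)) by ring.
apply: le_trans IH; apply: ler_wpM2l => //.
have n0 : 0 <= n%:R :> R by apply: ler0n.
rewrite -natr1; nra.
Qed.

Lemma num_bound (k c : nat) (S : R) : leq 2 c -> leq c k -> 0 <= S -> S <= 1 ->
  (1 - c%:R / k%:R) * S * (1 - c%:R / k%:R * S) ^+ (k - 1)%nat <= 2 / c%:R.
Proof.
move=> c2 ck S0 S1.
have k2 : leq 2 k by apply: leq_trans ck.
set p := c%:R / k%:R.
have kr2 : 2 <= k%:R :> R by rewrite (ler_nat R 2 k).
have cr2 : 2 <= c%:R :> R by rewrite (ler_nat R 2 c).
have crk : c%:R <= k%:R :> R by rewrite ler_nat.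
have kr0 : 0 < k%:R :> R by apply: lt_le_trans kr2.
have pk : p * k%:R = c%:R by rewrite /p mulfVK // gt_eqF.
have p0 : 0 <= p by rewrite /p divr_ge0 // ler0n.
have p1 : p <= 1 by rewrite /p ler_pdivrMr // mul1r.
have pS0 : 0 <= p * S by apply: mulr_ge0.
have pS1 : p * S <= 1 by nra.
have hb := bern (k - 1)%nat pS0 pS1.
rewrite natrB ?(leq_trans _ k2) // in hb.
set y := (1 - p * S) ^+ (k - 1)%nat in hb *.
have y0 : 0 <= y by apply: exprn_ge0; rewrite subr_ge0.
have cr0 : 0 < c%:R :> R by apply: lt_le_trans cr2.
rewrite ler_pdivlMr //.
have h1 : (1 - p) * S * y * c%:R <= S * y * c%:R.
  apply: ler_wpM2r; first exact: ltW.
  rewrite -mulrA -[X in _ <= X]mul1r; apply: ler_wpM2r; first exact: mulr_ge0.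
  by rewrite lerBlDr lerDl.
apply: le_trans h1 _.
have h2 : S * y * c%:R = y * (p * S) * k%:R by rewrite -pk; ring.
rewrite h2.
have h3 : 0 <= y * (p * S) by apply: mulr_ge0.
have h4 : y * (p * S) * k%:R <= 2 * (y * (p * S) * (k%:R - 1)).
  have -> : 2 * (y * (p * S) * (k%:R - 1)) = y * (p * S) * (2 * k%:R - 2) by ring.
  apply: ler_wpM2l => //; lra.
apply: le_trans h4 _.
have h5 : y * (p * S) * (k%:R - 1) <= 1 by nra.
lra.
Qed.

Definition freeT (V : finType) (E : {set {set V}}) (pi : seq {set V}) (e : {set V})
  (T : {ffun {set V} -> bool}) : bool :=
  [disjoint e & cover (greedy [set f in E | T f] (take (index e pi) pi))].

Lemma freeT_tog (V : finType) (E : {set {set V}}) (pi : seq {set V}) (e : {set V}) T :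
  e \in pi -> freeT E pi e (tog e T) = freeT E pi e T.
Proof.
move=> epi; rewrite /freeT (@greedy_eq _ [set f in E | tog e T f] [set f in E | T f]) //.
move=> f fs; rewrite !inE ffunE.
case: eqP => // fe; move: fs; rewrite fe (in_take _ epi) ltnn //.
Qed.

Lemma freeT_col (V : finType) (k : nat) (E : {set {set V}}) (pi : seq {set V}) (e : {set V})
  (X : clustering V k) i :
  freeT E pi e (col X i) =
  [disjoint e & cover (greedy_before (machine_edges E X i) pi e)].
Proof.
rewrite /freeT /greedy_before.
have -> : [set f in E | col X i f] = machine_edges E X i by apply/setP => f; rewrite !inE !ffunE.
by [].
Qed.

Definition hfun (V : finType) (k : nat) (E : {set {set V}}) (pi : seq {set V}) (e : {set V})
  (i1 i : 'I_k) (T : {ffun {set V} -> bool}) : R :=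
  if i == i1 then (~~ T e)%:R * (freeT E pi e T)%:R
  else 1 - (T e)%:R * (freeT E pi e T)%:R.

Lemma G_le (V : finType) (k : nat) (E : {set {set V}}) (pi : seq {set V})
  (Mstar : {set {set V}}) (e : {set V}) (i1 : 'I_k) (X : clustering V k) :
  e \in E -> e \in pi ->
  ((e \in free_edges E pi Mstar X i1) && (e \notin H_edges E pi X))%:R
    <= \prod_i hfun E pi e i1 i (col X i).
Proof.
move=> eE epi.
have h0 : forall i, 0 <= hfun E pi e i1 i (col X i).
  move=> i; rewrite /hfun; case: (i == i1); case: (col X i e); case: freeT => //=;
    rewrite ?mulr0 ?mul0r ?mulr1 ?subr0 ?subrr //.
case HG: (_ && _); last by apply: prodr_ge0 => i _.
move/andP: HG => [F1 NH].
have Hfree : freeT E pi e (col X i1).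
  by move: F1; rewrite inE freeT_col => /andP [].
have Hi : forall i, ~~ (col X i e && freeT E pi e (col X i)).
  move=> i; apply/negP => /andP [Ce Fe].
  move/negP: NH; apply; apply/bigcupP; exists i => //.
  apply: greedy_mem => //; first by rewrite inE eE /=; move: Ce; rewrite !ffunE.
  by move: Fe; rewrite freeT_col.
rewrite big1 ?lexx //; last move=> i _.
rewrite /hfun; have := Hi i.
have [->|ne] := eqVneq i i1; first by rewrite Hfree /=; case: (col X i1 e) => //=; rewrite mul1r.
by case: (col X i e); case: freeT => //= _; rewrite ?mulr0n ?mulr1n ?mul0r ?mulr0 subr0.
Qed.

Lemma edge_bound (V : finType) (k c : nat) (E : {set {set V}}) (pi : seq {set V})
  (Mstar : {set {set V}}) (e : {set V}) (i1 : 'I_k) :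
  leq 2 c -> leq c k -> e \in E -> e \in pi ->
  \sum_(X : clustering V k) clustering_prob E c X *
     ((e \in free_edges E pi Mstar X i1) && (e \notin H_edges E pi X))%:R
  <= 2 / c%:R.
Proof.
move=> c2 ck eE epi.
have k2 : leq 2 k by apply: leq_trans ck.
have kr0 : 0 < k%:R :> R by rewrite ltr0n; apply: leq_trans k2.
have p0 : 0 <= c%:R / k%:R :> R by rewrite divr_ge0 // ler0n.
have p1 : c%:R / k%:R <= 1 :> R by rewrite ler_pdivrMr // mul1r ler_nat.
set p := c%:R / k%:R in p0 p1 *.
set F := fun Y : {ffun 'I_k -> {ffun {set V} -> bool}} =>
  \prod_i (rho E p (Y i) * hfun E pi e i1 i (Y i)).
apply: (@le_trans _ _ (\sum_(X : clustering V k) F (col X))).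
  apply: ler_sum => X _; rewrite cprob_col /F big_split /=.
  apply: ler_wpM2l; first by apply: prodr_ge0 => i _; exact: rho_ge0.
  exact: G_le.
rewrite -(reindex (@col V k) (P := xpredT) (F := F)); last exact: onW_bij _ (col_bij V k).
rewrite /F -(bigA_distr_bigA (fun i T => rho E p T * hfun E pi e i1 i T)) /=.
set phi := fun T : {ffun {set V} -> bool} => (freeT E pi e T)%:R : R.
have Hphi : forall T, phi (tog e T) = phi T by move=> T; rewrite /phi freeT_tog.
set S := \sum_(T : {ffun {set V} -> bool} | ~~ T e) (\prod_(f | f != e) sig E p f (T f)) * phi T.
have hS1 : \sum_T rho E p T * hfun E pi e i1 i1 T = (1 - p) * S.
  rewrite (eq_bigr (fun T => rho E p T * ((fun b : bool => (~~ b)%:R) (T e) * phi T))); last first.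
    by move=> T _; rewrite /hfun eqxx.
  rewrite (@split_e V E p e eE (fun b : bool => (~~ b)%:R) phi Hphi) /=.
  by rewrite mulr1 mulr0 addr0.
have hS2 : forall i, i != i1 -> \sum_T rho E p T * hfun E pi e i1 i T = 1 - p * S.
  move=> i ne.
  rewrite (eq_bigr (fun T => rho E p T - rho E p T * ((fun b : bool => b%:R) (T e) * phi T))); last first.
    by move=> T _; rewrite /hfun (negbTE ne) mulrBr mulr1.
  rewrite sumrB rho_sum1 (@split_e V E p e eE (fun b : bool => b%:R) phi Hphi) /=.
  by rewrite mulr0 mulr1 add0r.
have hSq : \sum_T rho E p T * ((fun b : bool => 1) (T e) * phi T) = S.
  rewrite (@split_e V E p e eE (fun b : bool => 1) phi Hphi) /=.
  by rewrite !mulr1 subrK mul1r.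
have S0 : 0 <= S.
  rewrite -hSq; apply: sumr_ge0 => T _; rewrite /= mul1r; apply: mulr_ge0; first exact: rho_ge0.
  by rewrite /phi ler0n.
have S1 : S <= 1.
  rewrite -hSq; apply: (@le_trans _ _ (\sum_T rho E p T)); last by rewrite rho_sum1.
  apply: ler_sum => T _; rewrite /= mul1r.
  rewrite -[X in _ <= X]mulr1; apply: ler_wpM2l; first exact: rho_ge0.
  by rewrite /phi; case: freeT.
rewrite (bigD1 i1) //= hS1.
rewrite (eq_bigr (fun _ => 1 - p * S)); last by move=> i; exact: hS2.
rewrite prodr_const cardC1 card_ord -subn1.
exact: num_bound.
Qed.

Lemma ln2 : 1 / 2%:R < Rpower.ln 2%:R.
Proof.
have := Rpower.ln_lt_2. move/RltP.
have -> : IZR (BinNums.Zpos (BinNums.xO BinNums.xH)) = 2%:R by rewrite RealsE.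
by rewrite RinvE mul1r.
Qed.

Lemma lnc (c : nat) : leq 2 c -> Rpower.ln 2%:R <= Rpower.ln c%:R.
Proof.
move=> c2. rewrite leq_eqVlt in c2. case/orP: c2 => [/eqP <-|c2] //.
apply/ltW/RltP; apply: Rpower.ln_increasing; apply/RltP; rewrite ?ltr_nat //.
Qed.

Lemma diff_decomp (V : finType) (k : nat) (E : {set {set V}}) (w : {set V} -> R)
  (pi : seq {set V}) (Mstar : {set {set V}}) (i1 : 'I_k) (X : clustering V k) :
  wt w (free_edges E pi Mstar X i1) - wt w (free_edges E pi Mstar X i1 :&: H_edges E pi X)
  = \sum_(e in Mstar) w e *
     ((e \in free_edges E pi Mstar X i1) && (e \notin H_edges E pi X))%:R.
Proof.
rewrite /wt (big_setID (H_edges E pi X)) /= addrC addrK.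
rewrite big_mkcond [RHS]big_mkcond; apply: eq_bigr => e _.
rewrite !inE; case: (e \in Mstar); case: [disjoint _ & _]; case: (e \in H_edges E pi X) => //=;
  by rewrite ?mulr1 ?mulr0.
Qed.

Theorem lemma3p4 :
  exists C : R, 0 < C /\
  forall (V : finType) (E : {set {set V}}) (w : {set V} -> R)
         (k c : nat) (pi : seq {set V}) (Mstar : {set {set V}}) (i1 : 'I_k),
    simple_graph E ->
    (forall e, e \in E -> 0 <= w e) ->
    leq 2 c -> leq c k ->
    nonincreasing_order E w pi ->
    is_max_weight_matching E w Mstar ->
    val i1 = O ->
    Exp E c (fun X => wt w (free_edges E pi Mstar X i1 :&: H_edges E pi X))
      >= Exp E c (fun X => wt w (free_edges E pi Mstar X i1))
         - C * (Rpower.ln c%:R / c%:R) * opt E w.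
Proof.
exists 4; split; first by [].
move=> V E w k c pi Mstar i1 _ w0 c2 ck [_ piE _] [MM Mmax] _.
rewrite /Exp ?RmultE ?RdivE.
have cr0 : 0 < c%:R :> R by rewrite ltr0n; apply: leq_trans c2.
have ME : Mstar \subset E by case/andP: MM.
have Mw0 : 0 <= wt w Mstar.
  by apply: sumr_ge0 => e eM; apply: w0; apply: (subsetP ME).
have Mopt : wt w Mstar <= opt E w.
  rewrite /opt; apply: (le_bigmax_cond _ (wt w)); exact: MM.
rewrite lerBlDr -lerBlDl -sumrB.
under eq_bigr do rewrite -mulrBr diff_decomp mulr_sumr.
rewrite exchange_big /=.
apply: (@le_trans _ _ (\sum_(e in Mstar) w e * (2 / c%:R))).
  apply: ler_sum => e eM.
  have eE : e \in E by apply: (subsetP ME).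
  have epi : e \in pi by rewrite piE.
  rewrite (eq_bigr (fun X => w e * (clustering_prob E c X *
     ((e \in free_edges E pi Mstar X i1) && (e \notin H_edges E pi X))%:R))); last first.
    by move=> X _; rewrite mulrCA.
  rewrite -mulr_sumr; apply: ler_wpM2l; first exact: w0.
  exact: edge_bound.
rewrite -mulr_suml.
have l2 := ln2; have lc := lnc c2.
have h : 2 / c%:R <= 4 * (Rpower.ln c%:R / c%:R).
  rewrite mulrA ler_pM2r ?invr_gt0 //; lra.
have h2 : 0 <= 2 / c%:R :> R by rewrite divr_ge0 // ltW.
apply: (@le_trans _ _ (opt E w * (2 / c%:R))).
  by apply: ler_wpM2r.
rewrite mulrC; apply: ler_wpM2r => //; exact: le_trans Mopt.
Qed.
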